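(* Consider the planar system \[ \frac{dx}{dt}= x\Big(1-\frac{x}{\gamma}\Big)-\frac{xy}{(1+\alpha\xi)(\omega x^2+1)+x},\qquad \frac{dy}{dt}= \frac{\delta\big(x+\xi(\omega x^2+1)\big)y}{(1+\alpha\xi)(\omega x^2+1)+x}-my-\epsilon y^2, \] with positive parameters $\gamma,\alpha,\xi,\omega,\delta,m,\epsilon$ satisfying $\delta>m$. Then every solution of this system with initial condition in the positive quadrant ($x(0)>0$, $y(0)>0$) remains bounded.
   Context: $x(t)$ and $y(t)$ denote the (nondimensionalized) prey and predator densities; $\gamma$ is the prey carrying capacity, $\alpha$ the quality and $\xi$ the quantity of additional food given to predators, $\omega$ the prey group defence parameter, $\delta$ the maximal predator growth rate, $m$ the predator mortality rate and $\epsilon$ the intra-specific competition coefficient among predators. *)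

(* Defs.v *)
From Stdlib Require Import Reals.
From Coquelicot Require Import Coquelicot.
Open Scope R_scope.

Definition den (alpha xi omega x : R) : R :=
  (1 + alpha * xi) * (omega * x ^ 2 + 1) + x.

Definition fx (gamma alpha xi omega x y : R) : R :=
  x * (1 - x / gamma) - x * y / den alpha xi omega x.

Definition fy (alpha xi omega delta m eps x y : R) : R :=
  delta * (x + xi * (omega * x ^ 2 + 1)) * y / den alpha xi omega x
  - m * y - eps * y ^ 2.

Definition is_solution (gamma alpha xi omega delta m eps : R) (T : Rbar)
  (x y : R -> R) : Prop :=
  filterlim x (at_right 0) (locally (x 0)) /\
  filterlim y (at_right 0) (locally (y 0)) /\
  (forall t, 0 < t -> Rbar_lt (Finite t) T ->
     is_derive x t (fx gamma alpha xi omega (x t) (y t)) /\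
     is_derive y t (fy alpha xi omega delta m eps (x t) (y t))).

(* Main.v *)
Require Import Defs.
From Stdlib Require Import Reals.
From Coquelicot Require Import Coquelicot.
From Stdlib Require Import Lra.
Open Scope R_scope.

Lemma ballR (x : R) (e : posreal) y : ball x e y <-> Rabs (y - x) < e.
Proof. split; intros H; exact H. Qed.

Lemma right_cont (f : R -> R) : filterlim f (at_right 0) (locally (f 0)) ->
  forall e, 0 < e -> exists d, 0 < d /\ forall u, 0 < u < d -> Rabs (f u - f 0) < e.
Proof.
  intros Hc e He.
  destruct (Hc (ball (f 0) (mkposreal e He))) as [d Hd].
  { exists (mkposreal e He); auto. }
  exists d; split; [apply cond_pos|].
  intros u [H1 H2]. apply (Hd u); [|lra]. apply ballR. rewrite Rminus_0_r, Rabs_right; lra.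
Qed.

Lemma cont_at (f : R -> R) c : continuity_pt f c ->
  forall e, 0 < e -> exists d, 0 < d /\ forall u, Rabs (u - c) < d -> Rabs (f u - f c) < e.
Proof.
  intros Hc e He. apply continuity_pt_filterlim in Hc.
  destruct (Hc (ball (f c) (mkposreal e He))) as [d Hd].
  { exists (mkposreal e He); auto. }
  exists d; split; [apply cond_pos|].
  intros u Hu. apply (Hd u). apply ballR. exact Hu.
Qed.

Lemma der_cont (f df : R -> R) (T : Rbar) :
  (forall t, 0 < t -> Rbar_lt t T -> is_derive f t (df t)) ->
  forall t, 0 < t -> Rbar_lt t T -> continuity_pt f t.
Proof.
  intros Hd t H1 H2. apply continuity_pt_filterlim.
  apply (ex_derive_continuous f). exists (df t). now apply Hd.
Qed.

Lemma ltT (T : Rbar) a b : a <= b -> Rbar_lt b T -> Rbar_lt a T.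
Proof. intros H1 H2. apply Rbar_le_lt_trans with b; [exact H1|exact H2]. Qed.

Lemma upper_barrier (f df : R -> R) (T : Rbar) (B : R) :
  filterlim f (at_right 0) (locally (f 0)) ->
  (forall t, 0 < t -> Rbar_lt t T -> is_derive f t (df t)) ->
  (forall t, 0 < t -> Rbar_lt t T -> B < f t -> df t < 0) ->
  forall t, 0 <= t -> Rbar_lt t T -> f t <= Rmax (f 0 + 1) B.
Proof.
  intros Hc Hd Hneg t Ht0 HtT.
  set (M := Rmax (f 0 + 1) B).
  assert (HM1 : f 0 + 1 <= M) by apply Rmax_l.
  assert (HM2 : B <= M) by apply Rmax_r.
  destruct (Rle_dec (f t) M) as [|Hgt]; auto. exfalso. apply Rnot_le_lt in Hgt.
  destruct Ht0 as [Ht0|Ht0]; [| subst; lra].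
  destruct (right_cont f Hc 1 Rlt_0_1) as [d [Hd0 Hdd]].
  set (s := Rmin d t / 2).
  assert (Hs1 : 0 < s) by (unfold s; apply Rmin_case; lra).
  assert (Hs2 : s < t) by (unfold s; pose proof (Rmin_r d t); lra).
  assert (Hs3 : s < d) by (unfold s; pose proof (Rmin_l d t); lra).
  assert (Hfs : f s < M).
  { specialize (Hdd s (conj Hs1 Hs3)). apply Rabs_def2 in Hdd. lra. }
  destruct (continuity_ab_maj f s t) as [c [Hmax Hc1]]; [lra| |].
  { intros u Hu. apply (der_cont f df T Hd); [lra|]. apply ltT with t; auto; lra. }
  assert (Hfc : f t <= f c) by (apply Hmax; lra).
  assert (Hsc : s < c).
  { destruct (Rle_lt_dec c s); auto. assert (c = s) by lra. subst. lra. }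
  assert (HcT : Rbar_lt c T) by (apply ltT with t; auto; lra).
  destruct (cont_at f c (der_cont f df T Hd c ltac:(lra) HcT) (f c - M) ltac:(lra)) as [e [He Hee]].
  set (c' := c - Rmin e (c - s) / 2).
  assert (Hc'1 : s < c') by (unfold c'; pose proof (Rmin_r e (c - s)); lra).
  assert (Hc'2 : c' < c) by (unfold c'; apply Rmin_case; lra).
  assert (Hc'3 : c - c' < e) by (unfold c'; pose proof (Rmin_l e (c - s)); lra).
  destruct (MVT_gen f c' c df) as [z [Hz Heq]].
  { rewrite Rmin_left, Rmax_right by lra. intros u Hu. apply Hd; [lra|]. apply ltT with t; auto; lra. }
  { rewrite Rmin_left, Rmax_right by lra. intros u Hu. apply (der_cont f df T Hd); [lra|]. apply ltT with t; auto; lra. }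
  rewrite Rmin_left, Rmax_right in Hz by lra.
  assert (Hfz : B < f z).
  { assert (Rabs (z - c) < e) by (rewrite Rabs_left1; lra).
    specialize (Hee z H). apply Rabs_def2 in Hee. lra. }
  assert (Hdz : df z < 0) by (apply Hneg; [lra| apply ltT with t; auto; lra | exact Hfz]).
  assert (f c' <= f c) by (apply Hmax; lra).
  assert (df z * (c - c') < 0) by (apply Rmult_neg_pos; lra).
  lra.
Qed.

Lemma pos_lemma (f df : R -> R) (T : Rbar) :
  filterlim f (at_right 0) (locally (f 0)) -> 0 < f 0 ->
  (forall t, 0 < t -> Rbar_lt t T -> is_derive f t (df t)) ->
  (forall a b, 0 < a -> a <= b -> Rbar_lt b T -> exists K, 0 <= K /\
     forall t, a <= t <= b -> 0 < f t -> - K * f t <= df t) ->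
  forall t, 0 <= t -> Rbar_lt t T -> 0 < f t.
Proof.
  intros Hc Hf0 Hd HK t Ht0 HtT.
  destruct Ht0 as [Ht0|Ht0]; [| subst; lra].
  destruct (Rlt_le_dec 0 (f t)) as [|Hft]; auto. exfalso.
  destruct (right_cont f Hc (f 0 / 2) ltac:(lra)) as [d [Hd0 Hdd]].
  set (d' := Rmin d t / 2).
  assert (Hd'1 : 0 < d') by (unfold d'; apply Rmin_case; lra).
  assert (Hd'2 : d' < t) by (unfold d'; pose proof (Rmin_r d t); lra).
  assert (Hd'3 : d' < d) by (unfold d'; pose proof (Rmin_l d t); lra).
  set (E := fun u => 0 <= u <= t /\ forall v, 0 < v <= u -> 0 < f v).
  assert (HE1 : bound E) by (exists t; intros u [Hu _]; lra).
  assert (HE2 : E d').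
  { split; [lra|]. intros v Hv. specialize (Hdd v ltac:(lra)). apply Rabs_def2 in Hdd. lra. }
  destruct (completeness E HE1 (ex_intro _ d' HE2)) as [r [Hub Hlub]].
  assert (Hrt : r <= t) by (apply Hlub; intros u [Hu _]; lra).
  assert (Hrd : d' <= r) by (apply Hub; exact HE2).
  assert (Hpos : forall v, 0 < v < r -> 0 < f v).
  { intros v Hv. destruct (Rlt_le_dec 0 (f v)) as [|Hfv]; auto. exfalso.
    assert (r <= v); [|lra]. apply Hlub. intros u [Hu1 Hu2].
    destruct (Rle_lt_dec u v); auto. assert (0 < f v) by (apply Hu2; lra). lra. }
  set (a := d' / 2).
  assert (HrT : Rbar_lt r T) by (apply ltT with t; auto).
  destruct (HK a r ltac:(unfold a; lra) ltac:(unfold a; lra) HrT) as [K [HK0 HKb]].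
  assert (Hz : forall u, 0 < u -> Rbar_lt u T -> is_derive (fun u => f u * exp (K*u)) u
      (df u * exp (K*u) + f u * (K * exp (K*u)))).
  { intros u Hu1 Hu2.
    assert (H2 : is_derive (fun u => exp (K*u)) u (K * exp (K*u))) by (auto_derive; auto; ring).
    exact (is_derive_mult _ _ _ _ _ (Hd u Hu1 Hu2) H2 Rmult_comm). }
  set (c := f a * exp (K * a - K * r)).
  assert (Hfa : 0 < f a) by (apply Hpos; unfold a; lra).
  assert (Hcpos : 0 < c) by (unfold c; apply Rmult_lt_0_compat; auto; apply exp_pos).
  assert (Hlow : forall u, a <= u < r -> c <= f u).
  { intros u Hu.
    assert (Hzz : f a * exp (K*a) <= f u * exp (K*u)).
    { destruct (Req_dec a u) as [Heq|Hne]; [subst; lra|].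
      destruct (MVT_gen (fun u => f u * exp (K*u)) a u (fun u => df u * exp (K*u) + f u * (K * exp (K*u)))) as [z [Hz1 Hz2]].
      { rewrite Rmin_left, Rmax_right by lra. intros w Hw. apply Hz; [unfold a in *; lra|]. apply ltT with t; auto; lra. }
      { rewrite Rmin_left, Rmax_right by lra. intros w Hw. apply continuity_pt_filterlim.
        apply (ex_derive_continuous (fun u => f u * exp (K*u))). eexists. apply Hz; [unfold a in *; lra|]. apply ltT with t; auto; lra. }
      rewrite Rmin_left, Rmax_right in Hz1 by lra.
      assert (Hfz : 0 < f z) by (apply Hpos; unfold a in *; lra).
      assert (Hdz : - K * f z <= df z) by (apply HKb; auto; lra).
      assert (0 <= df z * exp (K*z) + f z * (K * exp (K*z))).
      { pose proof (exp_pos (K*z)).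
        replace (df z * exp (K*z) + f z * (K * exp (K*z))) with ((df z + K * f z) * exp (K*z)) by ring.
        apply Rmult_le_pos; lra. }
      assert (0 <= (df z * exp (K*z) + f z * (K * exp (K*z))) * (u - a)) by (apply Rmult_le_pos; lra).
      lra. }
    unfold c. unfold Rminus. rewrite exp_plus.
    assert (Hu' : 0 < f u).
    { apply Rmult_lt_reg_r with (exp (K*u)); [apply exp_pos|].
      pose proof (exp_pos (K*a)). rewrite Rmult_0_l. nra. }
    assert (exp (K*u) <= exp (K*r)).
    { destruct (Req_dec (K*u) (K*r)) as [e|e]; [rewrite e; lra|]. left. apply exp_increasing. nra. }
    replace (exp (- (K*r))) with (/ exp (K*r)) by (rewrite exp_Ropp; auto).
    pose proof (exp_pos (K*r)). pose proof (exp_pos (K*u)). pose proof (exp_pos (K*a)).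
    apply Rmult_le_reg_r with (exp (K*r)); auto.
    replace (f a * (exp (K*a) * / exp (K*r)) * exp (K*r)) with (f a * exp (K*a)) by (field; lra).
    apply Rle_trans with (f u * exp (K*u)); auto.
    apply Rmult_le_compat_l; lra. }
  assert (Hr0 : 0 < r) by lra.
  destruct (cont_at f r (der_cont f df T Hd r Hr0 HrT) c Hcpos) as [e [He Hee]].
  set (u := r - Rmin e (r - a) / 2).
  assert (Har : a < r) by (unfold a; lra).
  assert (Hu1 : a <= u < r).
  { unfold u. pose proof (Rmin_r e (r - a)). split; [lra|]. apply Rmin_case; lra. }
  assert (Hfr : 0 < f r).
  { assert (Rabs (u - r) < e).
    { rewrite Rabs_left1 by lra. unfold u. pose proof (Rmin_l e (r - a)). pose proof (Rmin_r e (r - a)).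
      assert (0 < Rmin e (r - a)) by (apply Rmin_case; lra). lra. }
    specialize (Hee u H). apply Rabs_def2 in Hee. specialize (Hlow u Hu1). lra. }
  destruct (Req_dec r t) as [Hrt'|Hrt']; [subst; lra|].
  destruct (cont_at f r (der_cont f df T Hd r Hr0 HrT) (f r) Hfr) as [e2 [He2 Hee2]].
  set (u' := r + Rmin e2 (t - r) / 2).
  assert (Hu'1 : r < u') by (unfold u'; apply Rmin_case; lra).
  assert (Hu'2 : u' <= t) by (unfold u'; pose proof (Rmin_r e2 (t - r)); lra).
  assert (E u').
  { split; [lra|]. intros v Hv. destruct (Rlt_le_dec v r); [apply Hpos; lra|].
    assert (Rabs (v - r) < e2) by (rewrite Rabs_right by lra; unfold u' in Hv; pose proof (Rmin_l e2 (t - r)); lra).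
    specialize (Hee2 v H). apply Rabs_def2 in Hee2. lra. }
  specialize (Hub u' H). lra.
Qed.

Lemma den_ge alpha xi omega x : 0 < alpha -> 0 < xi -> 0 < omega -> 0 <= x ->
  omega * x ^ 2 + 1 + x <= den alpha xi omega x /\ 1 <= den alpha xi omega x.
Proof.
  intros. unfold den. assert (0 <= omega * x^2) by (apply Rmult_le_pos; [lra| apply pow_le; lra]).
  assert (0 <= alpha * xi * (omega * x ^ 2 + 1)) by (apply Rmult_le_pos; [apply Rmult_le_pos|]; lra).
  split; nra.
Qed.

Lemma ydiv_le alpha xi omega x y Y : 0 < alpha -> 0 < xi -> 0 < omega -> 0 <= x ->
  Rabs y <= Y -> y / den alpha xi omega x <= Y.
Proof.
  intros. destruct (den_ge alpha xi omega x) as [_ H4]; auto.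
  apply Rle_trans with (Rabs y / den alpha xi omega x).
  { unfold Rdiv. apply Rmult_le_compat_r; [left; apply Rinv_0_lt_compat; lra| apply Rle_abs]. }
  apply Rle_div_l; [lra|]. pose proof (Rabs_pos y). nra.
Qed.

Lemma fx_low gamma alpha xi omega x y X Y : 0 < gamma -> 0 < alpha -> 0 < xi -> 0 < omega ->
  0 < x -> x <= X -> Rabs y <= Y ->
  - (Rabs X / gamma + Y) * x <= fx gamma alpha xi omega x y.
Proof.
  intros. unfold fx.
  assert (y / den alpha xi omega x <= Y) by (apply ydiv_le; auto; lra).
  replace (x * y / den alpha xi omega x) with (x * (y / den alpha xi omega x)) by (unfold Rdiv; ring).
  replace (x / gamma) with (x * / gamma) by reflexivity.
  assert (0 < / gamma) by (apply Rinv_0_lt_compat; auto).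
  replace (Rabs X / gamma) with (Rabs X * / gamma) by reflexivity.
  pose proof (Rle_abs X).
  assert (x * / gamma <= Rabs X * / gamma) by (apply Rmult_le_compat_r; lra).
  assert (x * (x * / gamma) <= x * (Rabs X * / gamma)) by (apply Rmult_le_compat_l; lra).
  assert (x * (y / den alpha xi omega x) <= x * Y) by (apply Rmult_le_compat_l; lra).
  nra.
Qed.

Lemma fx_neg gamma alpha xi omega x y : 0 < gamma -> 0 < alpha -> 0 < xi -> 0 < omega ->
  0 < x -> 0 < y -> gamma < x -> fx gamma alpha xi omega x y < 0.
Proof.
  intros. unfold fx. destruct (den_ge alpha xi omega x) as [_ H6]; auto; try lra.
  assert (0 <= x * y / den alpha xi omega x).
  { unfold Rdiv. apply Rmult_le_pos; [nra| left; apply Rinv_0_lt_compat; lra]. }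
  assert (1 < x / gamma) by (apply Rlt_div_r; lra).
  nra.
Qed.

Lemma fy_low alpha xi omega delta m eps x y Y : 0 < alpha -> 0 < xi -> 0 < omega ->
  0 < delta -> 0 < m -> 0 < eps -> 0 < x -> 0 < y -> y <= Y ->
  - (m + eps * Y) * y <= fy alpha xi omega delta m eps x y.
Proof.
  intros. unfold fy. destruct (den_ge alpha xi omega x) as [_ H9]; auto; try lra.
  assert (0 <= delta * (x + xi * (omega * x ^ 2 + 1)) * y / den alpha xi omega x).
  { unfold Rdiv. apply Rmult_le_pos; [|left; apply Rinv_0_lt_compat; lra].
    assert (0 <= omega * x^2) by (apply Rmult_le_pos; [lra| apply pow_le; lra]).
    apply Rmult_le_pos; [apply Rmult_le_pos|]; nra. }
  assert (y * y <= Y * y) by (apply Rmult_le_compat_r; lra).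
  assert (eps * (y * y) <= eps * (Y * y)) by (apply Rmult_le_compat_l; lra).
  simpl. nra.
Qed.

Lemma fy_neg alpha xi omega delta m eps x y : 0 < alpha -> 0 < xi -> 0 < omega ->
  0 < delta -> 0 < m -> 0 < eps -> 0 < x -> 0 < y -> delta * (1 + xi) / eps < y ->
  fy alpha xi omega delta m eps x y < 0.
Proof.
  intros. unfold fy. destruct (den_ge alpha xi omega x) as [H9 H10]; auto; try lra.
  assert (0 <= omega * x^2) by (apply Rmult_le_pos; [lra| apply pow_le; lra]).
  assert (delta * (x + xi * (omega * x ^ 2 + 1)) * y / den alpha xi omega x <= delta * (1 + xi) * y).
  { apply Rle_div_l; [lra|].
    assert (x + xi * (omega * x ^ 2 + 1) <= (1 + xi) * den alpha xi omega x) by nra.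
    assert (0 <= delta * y) by nra. nra. }
  assert (delta * (1 + xi) < eps * y).
  { apply Rlt_div_l in H7; lra. }
  nra.
Qed.

Theorem mainTheorem1 (gamma alpha xi omega delta m eps : R) (T : Rbar)
  (x y : R -> R) :
  0 < gamma -> 0 < alpha -> 0 < xi -> 0 < omega -> 0 < delta -> 0 < m ->
  0 < eps -> delta > m ->
  Rbar_lt (Finite 0) T ->
  is_solution gamma alpha xi omega delta m eps T x y ->
  0 < x 0 -> 0 < y 0 ->
  exists M : R, forall t, 0 <= t -> Rbar_lt (Finite t) T ->
    Rabs (x t) <= M /\ Rabs (y t) <= M.
Proof.
  intros Hg Ha Hxi Hom Hdel Hm Heps Hdm HT Hsol Hx0 Hy0.
  destruct Hsol as [Hcx [Hcy Hder]].
  assert (Hdx : forall t, 0 < t -> Rbar_lt t T -> is_derive x t (fx gamma alpha xi omega (x t) (y t)))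
    by (intros; apply Hder; auto).
  assert (Hdy : forall t, 0 < t -> Rbar_lt t T -> is_derive y t (fy alpha xi omega delta m eps (x t) (y t)))
    by (intros; apply Hder; auto).
  assert (Bnd : forall a b, 0 < a -> a <= b -> Rbar_lt b T -> exists X Y, 0 <= Y /\
            forall t, a <= t <= b -> x t <= X /\ Rabs (y t) <= Y).
  { intros a b Ha' Hab HbT.
    destruct (continuity_ab_maj x a b Hab) as [cx [Hcx1 _]].
    { intros c Hc. apply (der_cont x _ T Hdx); [lra| apply ltT with b; auto; lra]. }
    destruct (continuity_ab_maj (fun t => Rabs (y t)) a b Hab) as [cy [Hcy1 _]].
    { intros c Hc. apply (continuity_pt_comp y Rabs).
      - apply (der_cont y _ T Hdy); [lra| apply ltT with b; auto; lra].
      - apply Rcontinuity_abs. }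
    exists (x cx), (Rabs (y cy)). split; [apply Rabs_pos|].
    intros t Ht. split; [apply Hcx1; auto| apply (Hcy1 t Ht)]. }
  assert (Hxp : forall t, 0 <= t -> Rbar_lt t T -> 0 < x t).
  { apply (pos_lemma x (fun t => fx gamma alpha xi omega (x t) (y t)) T Hcx Hx0 Hdx).
    intros a b Ha' Hab HbT. destruct (Bnd a b Ha' Hab HbT) as [X [Y [HY HXY]]].
    exists (Rabs X / gamma + Y). split.
    { assert (0 <= Rabs X / gamma) by (apply Rle_div_r; [lra| rewrite Rmult_0_l; apply Rabs_pos]). lra. }
    intros t Ht Hxt. destruct (HXY t Ht). apply fx_low; auto. }
  assert (Hyp : forall t, 0 <= t -> Rbar_lt t T -> 0 < y t).
  { apply (pos_lemma y (fun t => fy alpha xi omega delta m eps (x t) (y t)) T Hcy Hy0 Hdy).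
    intros a b Ha' Hab HbT. destruct (Bnd a b Ha' Hab HbT) as [X [Y [HY HXY]]].
    exists (m + eps * Y). split; [nra|].
    intros t Ht Hyt. destruct (HXY t Ht). apply fy_low; auto.
    - apply Hxp; [lra| apply ltT with b; auto; lra].
    - apply Rle_trans with (Rabs (y t)); auto. apply Rle_abs. }
  assert (Hux := upper_barrier x _ T gamma Hcx Hdx
    (fun t Ht HtT Hgt => fx_neg gamma alpha xi omega (x t) (y t) Hg Ha Hxi Hom
        (Hxp t (Rlt_le _ _ Ht) HtT) (Hyp t (Rlt_le _ _ Ht) HtT) Hgt)).
  assert (Huy := upper_barrier y _ T (delta * (1 + xi) / eps) Hcy Hdy
    (fun t Ht HtT Hgt => fy_neg alpha xi omega delta m eps (x t) (y t) Ha Hxi Hom Hdel Hm Heps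
        (Hxp t (Rlt_le _ _ Ht) HtT) (Hyp t (Rlt_le _ _ Ht) HtT) Hgt)).
  exists (Rmax (Rmax (x 0 + 1) gamma) (Rmax (y 0 + 1) (delta * (1 + xi) / eps))).
  intros t Ht HtT.
  pose proof (Hxp t Ht HtT). pose proof (Hyp t Ht HtT).
  rewrite !Rabs_right by lra. split.
  - apply Rle_trans with (Rmax (x 0 + 1) gamma); [apply Hux; auto| apply Rmax_l].
  - apply Rle_trans with (Rmax (y 0 + 1) (delta * (1 + xi) / eps)); [apply Huy; auto| apply Rmax_r].
Qed.
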